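(* Let $C\subset\mathbb{R}^n$ be a compact convex set containing $0$. Let $g\in C$ with $g\ne0$ and let $H$ be a symmetric positive definite $n\times n$ matrix. Set $s=-Hg$, let $g_+$ be any maximizer of $z\mapsto z^Ts$ over $C$, and set $y=g_+-g$, $V=I-\frac{sy^T}{s^Ty}$, $H_+=VHV^T+\frac{ss^T}{s^Ty}$. Then $$\det H_+\le \frac{\det H}{1+\operatorname{sym}(C)}.$$
   Context: The symmetry measure of $C$ is $\operatorname{sym}(C)=\max\{t: g\in C\Rightarrow -tg\in C\}$. (Under the hypotheses, $s^Ty\ge g^THg>0$, so $H_+$ is well defined.) *)

(* Defs.v *)
From HB Require Import structures.
From mathcomp Require Import all_boot all_order all_algebra.
From mathcomp Require Import all_classical all_reals all_analysis.
Set Implicit Arguments. Unset Strict Implicit. Unset Printing Implicit Defensive.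
Import Order.TTheory GRing.Theory Num.Theory.
Import numFieldNormedType.Exports.
Local Open Scope classical_set_scope.
Local Open Scope ring_scope.

Definition dotv (R : realType) (n : nat) (u v : 'cV[R]_n) : R := (u^T *m v) 0 0.

Definition sym_posdef (R : realType) (n : nat) (H : 'M[R]_n) : Prop :=
  H^T = H /\ forall x : 'cV[R]_n, x != 0 -> 0 < dotv x (H *m x).

(* symmetry measure sym(C) = max {t : g \in C -> -t g \in C}
   (taken as the supremum of that set of reals) *)
Definition symm (R : realType) (n : nat) (C : set 'cV[R]_n) : R :=
  sup [set t : R | forall z, C z -> C (- (t *: z))].

Definition bfgs_update (R : realType) (n : nat) (H : 'M[R]_n) (s y : 'cV[R]_n)
  : 'M[R]_n :=
  let V := 1%:M - (dotv s y)^-1 *: (s *m y^T) in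
  V *m H *m V^T + (dotv s y)^-1 *: (s *m s^T).

(* Main.v *)
Require Import Defs.
From HB Require Import structures.
From mathcomp Require Import all_boot all_order all_algebra.
From mathcomp Require Import all_classical all_reals all_analysis.
From mathcomp Require Import polyrcf.
From mathcomp Require Import ring lra.
Import Order.TTheory GRing.Theory Num.Theory.
Import numFieldNormedType.Exports.
Local Open Scope classical_set_scope.
Local Open Scope ring_scope.

Lemma det_rank1 (R : realType) n (u v : 'cV[R]_n) :
  \det (1%:M + u *m v^T) = 1 + dotv v u.
Proof.
have E : block_mx 1%:M 0 v^T 1%:M *m (block_mx (1%:M + u *m v^T) u 0 1%:M *m block_mx 1%:M 0 (-v^T) 1%:M)
   = block_mx 1%:M u 0 (1%:M + v^T *m u) :> 'M[R]_(n + 1).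
  rewrite !mulmx_block !(mulmx0, mul0mx, mulmx1, mul1mx, addr0, add0r).
  by rewrite mulmxN addrK mulmx1 subrr addrC.
have := congr1 determinant E.
rewrite !det_mulmx det_lblock det_ublock det_ublock det_lblock !det1 !mul1r !mulr1.
move=> ->; rewrite det_mx11 !mxE /dotv eqxx; congr (_ + _); by rewrite mxE.
Qed.

Lemma det_posdef (R : realType) n (H : 'M[R]_n) : sym_posdef H -> 0 < \det H.
Proof.
move=> [HT Hp].
have nz : forall c : R, 0 <= c -> \det (c%:M + H) != 0.
  move=> c c0; apply/negP => /det0P [v v0 vA].
  have : dotv v^T ((c%:M + H) *m v^T) = 0.
    by rewrite /dotv trmxK mulmxA vA mul0mx mxE.
  have x0 : v^T != 0 by rewrite trmx_eq0.
  have := Hp _ x0.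
  have xx : 0 <= dotv v^T v^T.
    rewrite /dotv mxE; apply: sumr_ge0 => j _; rewrite !mxE -expr2; exact: sqr_ge0.
  rewrite /dotv mulmxDl mul_scalar_mx mulmxDr -scalemxAr.
  move=> H1 H2; have : 0 < (c *: (v^T^T *m v^T) + v^T^T *m (H *m v^T)) 0 0.
    by rewrite mxE [X in X + _]mxE ltr_pwDr // mulr_ge0.
  by rewrite H2 ltxx.
pose p := char_poly (- H).
have pE : forall x, p.[x] = \det (x%:M + H).
  move=> x; rewrite /p /char_poly -horner_evalE -det_map_mx.
  congr (\det _); apply/matrixP=> i j.
  by rewrite !mxE rmorphB rmorphMn /= !horner_evalE hornerX hornerC opprK.
have lc : lead_coef p = 1 by apply/eqP; exact: char_poly_monic.
have lc0 : (0:R) < lead_coef p by rewrite lc ltr01.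
have [N HN] := poly_pinfty_gt_lc lc0.
rewrite lc in HN.
have p0 : p.[0] = \det H by rewrite pE; congr (\det _); apply/matrixP=> i j; rewrite !mxE mul0rn add0r.
rewrite -p0 ltNge; apply/negP => hle.
have hM : p.[Num.max N 0] >= 0.
  have m1 : N <= Num.max N 0 by rewrite le_max lexx.
  by apply: le_trans (HN _ m1).
have m0 : 0 <= Num.max N 0 by rewrite le_max lexx orbT.
have hh : p.[0] <= 0 <= p.[Num.max N 0] by rewrite hle hM.
have [x /andP [x0 _] rx] := @poly_ivt _ p 0 (Num.max N 0) m0 hh.
by have := nz x x0; rewrite -pE (rootP rx) eqxx.
Qed.

Lemma dotvC (R : realType) n (u v : 'cV[R]_n) : dotv u v = dotv v u.
Proof.
rewrite /dotv; have -> : u^T *m v = (v^T *m u)^T by rewrite trmx_mul trmxK.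
by rewrite mxE.
Qed.

Lemma bfgs_T (R : realType) n (H : 'M[R]_n) (s y w : 'cV[R]_n) (a : R) :
  H^T = H -> a * dotv s y = 1 ->
  (1%:M - a *: (s *m y^T)) *m (H *m w) = 0 ->
  w^T *m H *m w = a%:M ->
  let V := 1%:M - a *: (s *m y^T) in
  let T := V + s *m w^T in
  V *m H *m V^T + a *: (s *m s^T) = T *m H *m T^T.
Proof.
move=> HT ad VHw wHw V T.
have wHV : w^T *m H *m V^T = 0.
  by rewrite -[H in LHS]HT -trmx_mul -trmx_mul mulmxA -mulmxA VHw trmx0.
rewrite /T [(V + s *m w^T)^T]linearD /= trmx_mul trmxK mulmxDl mulmxDl !mulmxDr.
have e1 : V *m H *m (w *m s^T) = 0 by rewrite mulmxA -(mulmxA V) VHw mul0mx.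
have e2 : s *m w^T *m H *m V^T = 0 by rewrite -!mulmxA (mulmxA w^T) wHV mulmx0.
have e3 : s *m w^T *m H *m (w *m s^T) = a *: (s *m s^T).
  rewrite !mulmxA -(mulmxA s) -(mulmxA s (w^T *m H) w) wHw mul_mx_scalar.
  by rewrite scalemxAl.
by rewrite e1 e2 e3 addr0 add0r.
Qed.

Lemma scE (R : realType) (k : R) (M : 'M[R]_1) : (k *: M) 0 0 = k * M 0 0.
Proof. by rewrite mxE. Qed.

Lemma trmxZ (R : realType) m n (k : R) (A : 'M[R]_(m, n)) : (k *: A)^T = k *: A^T.
Proof. by apply/matrixP => i j; rewrite !mxE. Qed.

Lemma dotvBl (R : realType) n (u v z : 'cV[R]_n) : dotv (u - v) z = dotv u z - dotv v z.
Proof. rewrite /dotv linearB /= mulmxBl; move: (u^T *m z) (v^T *m z) => A B; by rewrite !mxE. Qed.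
Lemma dotvZl (R : realType) n k (u z : 'cV[R]_n) : dotv (k *: u) z = k * dotv u z.
Proof. rewrite /dotv linearZ /= -scalemxAl; move: (u^T *m z) => A; by rewrite !mxE. Qed.
Lemma dotvNr (R : realType) n (u z : 'cV[R]_n) : dotv u (- z) = - dotv u z.
Proof. rewrite /dotv mulmxN; move: (u^T *m z) => A; by rewrite !mxE. Qed.

Lemma det_bfgs (R : realType) n (H : 'M[R]_n) (g y : 'cV[R]_n) :
  sym_posdef H -> g != 0 -> 0 < dotv (- (H *m g)) y ->
  \det (bfgs_update H (- (H *m g)) y) =
    \det H * (dotv g (H *m g) / dotv (- (H *m g)) y).
Proof.
move=> [HT Hp] g0.
set s := - (H *m g); set d := dotv s y; set q := dotv g (H *m g) => dpos.
have q0 : 0 < q := Hp g g0.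
pose a := d^-1. pose l := Num.sqrt (a / q).
have l2 : l * l = a / q.
  by rewrite -expr2 sqr_sqrtr // divr_ge0 // ltW // invr_gt0.
pose w := l *: g.
have ad : a * d = 1 by rewrite mulVf // gt_eqF.
have ys : dotv y s = d by rewrite dotvC.
have Vs : (1%:M - a *: (s *m y^T)) *m s = 0.
  rewrite mulmxBl mul1mx -scalemxAl -mulmxA (mx11_scalar (y^T *m s)) mul_mx_scalar scalerA.
  by rewrite -/(dotv y s) ys ad scale1r subrr.
have Hg : H *m g = - s by rewrite opprK.
have VHw : (1%:M - a *: (s *m y^T)) *m (H *m w) = 0.
  by rewrite /w -scalemxAr Hg scalerN mulmxN -scalemxAr Vs scaler0 oppr0.
have wHw : w^T *m H *m w = a%:M.
  rewrite (mx11_scalar (w^T *m H *m w)); congr (_%:M).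
  rewrite /w linearZ /= -!mulmxA scE linearZ /= -scalemxAl scE mulrA.
  by rewrite -/(dotv g (H *m g)) -/q l2 divfK // gt_eqF.
rewrite /bfgs_update /= -/d -/a (@bfgs_T R n H s y w a HT ad VHw wHw).
have TE : 1%:M - a *: (s *m y^T) + s *m w^T = 1%:M + s *m (w - a *: y)^T.
  by rewrite [(w - _)^T]linearB /= !trmxZ mulmxBr -!scalemxAr addrA addrAC.
rewrite TE !det_mulmx det_tr det_rank1 dotvBl !dotvZl ys ad /s dotvNr -/q.
have -> : (1 + (l * - q - 1)) * \det H * (1 + (l * - q - 1)) = (l * l) * q * q * \det H by ring.
rewrite l2 /a; field; rewrite ?gt_eqF //.
Qed.

Theorem mainTheorem6 (R : realType) (n : nat) (C : set 'cV[R]_n)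
  (g gp : 'cV[R]_n) (H : 'M[R]_n) :
  compact C -> convex_set (C : set (convex_lmodType 'cV[R]_n)) -> C 0 ->
  C g -> g != 0 -> sym_posdef H ->
  C gp -> (forall z, C z -> dotv z (- (H *m g)) <= dotv gp (- (H *m g))) ->
  \det (bfgs_update H (- (H *m g)) (gp - g)) <= \det H / (1 + symm C).
Proof.
move=> _ _ C0 Cg g0 Hpd Cgp Hmax.
have dH := @det_posdef R n H Hpd.
have [HT Hp] := Hpd.
set s := - (H *m g).
set q := dotv g (H *m g).
have q0 : 0 < q := Hp g g0.
have gs : dotv g s = - q by rewrite /s dotvNr.
set S := [set t : R | forall z, C z -> C (- (t *: z))].
have S0 : S 0 by move=> z _; rewrite scale0r oppr0.
set b := dotv gp s.
have Sb : forall t, S t -> t * q <= b.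
  move=> t St; have := Hmax _ (St g Cg).
  by rewrite -/s -scaleNr dotvZl gs mulrN mulNr opprK.
have b0 : 0 <= b by have := Sb 0 S0; rewrite mul0r.
have ds : dotv s (gp - g) = b + q by rewrite dotvC dotvBl gs opprK.
have dpos : 0 < dotv s (gp - g) by rewrite ds ltr_wpDl.
rewrite det_bfgs // ds.
have ub : ubound S (b / q).
  by move=> t St; rewrite ler_pdivlMr //; exact: Sb.
have supb : symm C <= b / q by apply: ge_sup => //; exists 0.
have sup0 : 0 <= symm C.
  have hu : has_ubound S by exists (b / q).
  exact: (ub_le_sup hu S0).
rewrite ler_pdivlMr ?ltr_wpDr //.
rewrite -mulrA -[X in _ <= X]mulr1 ler_wpM2l ?(ltW dH) //.
rewrite mulrC mulrA ler_pdivrMr ?ltr_wpDl // mul1r mulrDl mul1r addrC lerD2r.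
by rewrite -ler_pdivlMr.
Qed.
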